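(* Let $F$ be an algebraically closed field, $R$ an $F$-algebra, $\sigma$ an $F$-algebra automorphism and $\delta$ a $\sigma$-derivation of $R$, and $T=R[x;\sigma,\delta]$. Assume that $T$ is a Hopf $F$-algebra and that $R$ is a right or left coideal subalgebra of $T$. Then either every $M\in\Xi(T)$ is of invariant type, or every $M\in\Xi(T)$ is of variant type.
   Context: Hopf algebras have bijective antipode. $R[x;\sigma,\delta]$ is the skew polynomial algebra with $xr-\sigma(r)x=\delta(r)$, $\delta(ab)=\delta(a)b+\sigma(a)\delta(b)$. $\Xi(T)$ is the set of ideals $M$ of $T$ with $T/M\cong F$. For $M\in\Xi(T)$ put $\mathfrak m=M\cap R$. $M$ is of invariant type if $\sigma(\mathfrak m)=\mathfrak m$ and $\delta(\mathfrak m)\subseteq\mathfrak m$; $M$ is of variant type if $\sigma(\mathfrak m)\neq\mathfrak m$ and $\delta([R,R])\subseteq\mathfrak m$, where $[R,R]$ is the set of commutators. *)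

(* Defs.v *)
From HB Require Import structures.
From mathcomp Require Import all_boot all_order all_algebra.
Set Implicit Arguments. Unset Strict Implicit. Unset Printing Implicit Defensive.
Import Order.TTheory GRing.Theory.
Local Open Scope ring_scope.

Section Defs.
Variable F : fieldType.

Definition lin_functional (V : lmodType F) (f : V -> F) : Prop :=
  forall (k : F) (a b : V), f (k *: a + b) = k * f a + f b.

Definition lin_map (V W : lmodType F) (f : V -> W) : Prop :=
  forall (k : F) (a b : V), f (k *: a + b) = k *: f a + f b.

Definition alg_hom (A B : algType F) (f : A -> B) : Prop :=
  [/\ lin_map f, forall a b, f (a * b) = f a * f b & f 1 = 1].

Definition alg_char (A : algType F) (f : A -> F) : Prop :=
  [/\ lin_functional f, forall a b, f (a * b) = f a * f b & f 1 = 1].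

Definition alg_automorphism (A : algType F) (s : A -> A) : Prop :=
  alg_hom s /\ bijective s.

Definition sigma_derivation (A : algType F) (s d : A -> A) : Prop :=
  lin_map d /\ forall a b, d (a * b) = d a * b + s a * d b.

(* T = R[x; sigma, delta] (Goodearl-Warfield): iota embeds R as a subalgebra of
   T, T is a free left R-module with basis 1, x, x^2, ..., and
   x r - sigma(r) x = delta(r) for all r in R. *)
Definition is_skew_poly_ext (R T : algType F) (iota : R -> T)
    (s d : R -> R) (x : T) : Prop :=
  [/\ alg_hom iota,
      forall r, x * iota r - iota (s r) * x = iota (d r),
      forall t : T, exists c : seq R,
        t = \sum_(i < size c) iota c`_i * x ^+ i
    & forall c : seq R,
        \sum_(i < size c) iota c`_i * x ^+ i = 0 -> forall i, c`_i = 0].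

(* An element of T (x) T (resp. T (x) T (x) T) is represented by a finite
   list of elementary tensors, the list [:: (a1,b1); ...] standing for
   a1 (x) b1 + ... .  Two representatives denote the same tensor iff all
   functionals f (x) g (with f, g linear functionals) agree on them
   (over a field these separate the points of the algebraic tensor product). *)
Variable T : algType F.

Definition tens2 := seq (T * T).
Definition tens3 := seq (T * T * T).

Definition ev2 (f g : T -> F) (u : tens2) : F :=
  \sum_(p <- u) f p.1 * g p.2.
Definition ev3 (f g h : T -> F) (u : tens3) : F :=
  \sum_(p <- u) f p.1.1 * g p.1.2 * h p.2.

Definition teq2 (u v : tens2) : Prop :=
  forall f g, lin_functional f -> lin_functional g -> ev2 f g u = ev2 f g v.
Definition teq3 (u v : tens3) : Prop :=
  forall f g h, lin_functional f -> lin_functional g -> lin_functional h ->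
    ev3 f g h u = ev3 f g h v.

Definition tscale (k : F) (u : tens2) : tens2 := [seq (k *: p.1, p.2) | p <- u].
Definition tmul (u v : tens2) : tens2 := [seq (p.1 * q.1, p.2 * q.2) | p <- u, q <- v].

Definition Delta_id (D : T -> tens2) (u : tens2) : tens3 :=
  flatten [seq [seq (q.1, q.2, p.2) | q <- D p.1] | p <- u].
Definition id_Delta (D : T -> tens2) (u : tens2) : tens3 :=
  flatten [seq [seq (p.1, q.1, q.2) | q <- D p.2] | p <- u].

Definition is_hopf (D : T -> tens2) (eps : T -> F) (S : T -> T) : Prop :=
      (forall k a b, teq2 (D (k *: a + b)) (tscale k (D a) ++ D b)) /\
      (forall a b, teq2 (D (a * b)) (tmul (D a) (D b))) /\
      teq2 (D 1) [:: (1, 1)] /\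
      (forall t, teq3 (Delta_id D (D t)) (id_Delta D (D t))) /\
      alg_char eps /\
      (forall t, \sum_(p <- D t) eps p.1 *: p.2 = t) /\
      (forall t, \sum_(p <- D t) eps p.2 *: p.1 = t) /\
      lin_map S /\
      (forall t, \sum_(p <- D t) S p.1 * p.2 = (eps t)%:A) /\
      (forall t, \sum_(p <- D t) p.1 * S p.2 = (eps t)%:A) /\
      bijective S.

(* C is a right coideal: Delta(C) is contained in C (x) T;
   left coideal: Delta(C) is contained in T (x) C. *)
Definition right_coideal (D : T -> tens2) (C : T -> Prop) : Prop :=
  forall c, C c -> exists u : tens2, teq2 (D c) u /\ forall p, p \in u -> C p.1.
Definition left_coideal (D : T -> tens2) (C : T -> Prop) : Prop :=
  forall c, C c -> exists u : tens2, teq2 (D c) u /\ forall p, p \in u -> C p.2.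

Definition two_sided_ideal (M : T -> Prop) : Prop :=
  [/\ M 0, (forall k a b, M a -> M b -> M (k *: a + b))
    & forall a b, M b -> M (a * b) /\ M (b * a)].

(* M in Xi(T): M is an ideal of T with T/M isomorphic to F (as F-algebras),
   i.e. M is the kernel of an (automatically surjective) F-algebra map T -> F. *)
Definition in_Xi (M : T -> Prop) : Prop :=
  two_sided_ideal M /\
  exists phi : T -> F, alg_char phi /\ forall t, M t <-> phi t = 0.

End Defs.

Section Types.
Variables (F : fieldType) (R T : algType F).
Variables (iota : R -> T) (s d : R -> R).

Definition contr (M : T -> Prop) : R -> Prop := fun r => M (iota r).

Definition invariant_type (M : T -> Prop) : Prop :=
  let m := contr M in
  (forall r, m r <-> exists r', m r' /\ s r' = r) /\
  (forall r, m r -> m (d r)).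

Definition variant_type (M : T -> Prop) : Prop :=
  let m := contr M in
  ~ (forall r, m r <-> exists r', m r' /\ s r' = r) /\
  (forall a b : R, m (d (a * b - b * a))).
End Types.

(* Main.v *)
From mathcomp Require Import ring.
Require Import Defs.
From mathcomp Require Import all_boot all_order all_algebra.
From Stdlib Require Import FunctionalExtensionality ClassicalEpsilon Classical.
Set Implicit Arguments. Unset Strict Implicit. Unset Printing Implicit Defensive.
Import GRing.Theory.
Local Open Scope ring_scope.

Section Lin.
Variable F : fieldType.
Variable V : lmodType F.

Lemma lf0 (f : V -> F) : lin_functional f -> f 0 = 0.
Proof. move=> h; have := h 1 0 0; rewrite scale1r addr0 mul1r.
by move/(congr1 (fun z => z - f 0)); rewrite subrr addrK. Qed.

Lemma lfD (f : V -> F) a b : lin_functional f -> f (a + b) = f a + f b.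
Proof. by move=> h; rewrite -[a]scale1r h mul1r scale1r. Qed.

Lemma lfZ (f : V -> F) k a : lin_functional f -> f (k *: a) = k * f a.
Proof. by move=> h; rewrite -[k *: a]addr0 h lf0 // addr0. Qed.

Lemma lfN (f : V -> F) a : lin_functional f -> f (- a) = - f a.
Proof. by move=> h; rewrite -scaleN1r lfZ // mulN1r. Qed.

Lemma lfB (f : V -> F) a b : lin_functional f -> f (a - b) = f a - f b.
Proof. by move=> h; rewrite lfD // lfN. Qed.

Lemma lf_sum (f : V -> F) I (r : seq I) (G : I -> V) : lin_functional f ->
  f (\sum_(i <- r) G i) = \sum_(i <- r) f (G i).
Proof.
move=> h; elim: r => [|i r IH]; first by rewrite !big_nil lf0.
by rewrite !big_cons lfD // IH.
Qed.

Lemma lf_comp (W : lmodType F) (g : V -> W) (f : W -> F) :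
  lin_map g -> lin_functional f -> lin_functional (f \o g).
Proof. by move=> hg hf k a b /=; rewrite hg hf. Qed.

End Lin.

Section Hopf.
Variable F : fieldType.
Variable T : algType F.
Variables (D : T -> tens2 T) (eps : T -> F) (S : T -> T).
Hypothesis H : is_hopf D eps S.

Definition conv (f g : T -> F) (t : T) : F := @ev2 F T f g (D t).

Lemma ev2_cat_scale (f g : T -> F) k (u v : tens2 T) : lin_functional f ->
  ev2 f g (tscale k u ++ v) = k * ev2 f g u + ev2 f g v.
Proof.
move=> hf; rewrite /ev2 big_cat big_map /=; congr (_ + _).
rewrite mulr_sumr; apply: eq_bigr => p _; by rewrite lfZ // mulrA.
Qed.

Lemma conv_lin (f g : T -> F) : lin_functional f -> lin_functional g ->
  lin_functional (conv f g).
Proof.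
move=> hf hg k a b; rewrite /conv.
case: H => HD _.
by rewrite (HD k a b f g hf hg) ev2_cat_scale.
Qed.

Lemma ev2_tmul (f g : T -> F) (u v : tens2 T) : ev2 f g (tmul u v) =
  \sum_(p <- u) \sum_(q <- v) f (p.1 * q.1) * g (p.2 * q.2).
Proof. by rewrite /ev2 /tmul big_allpairs_dep. Qed.

Lemma conv_mul_ev (f g : T -> F) (a b : T) : lin_functional f -> lin_functional g ->
  conv f g (a * b) = ev2 f g (tmul (D a) (D b)).
Proof. move=> hf hg; case: H => _ [HM _]; exact: HM. Qed.

Lemma conv_char (f g : T -> F) : alg_char f -> alg_char g -> alg_char (conv f g).
Proof.
move=> [lf mf f1] [lg mg g1]; split.
- exact: conv_lin.
- move=> a b; rewrite conv_mul_ev // ev2_tmul /conv /ev2 big_distrl /=.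
  apply: eq_bigr => p _; rewrite big_distrr /=; apply: eq_bigr => q _.
  rewrite mf mg; rewrite !mulrA; congr (_ * _); rewrite -!mulrA; congr (_ * _).
  by rewrite mulrC.
- case: H => _ [_ [H1 _]]; rewrite /conv (H1 f g lf lg) /ev2 big_cons big_nil.
  by rewrite f1 g1 mulr1 addr0.
Qed.

Lemma coassoc (f g h : T -> F) t : lin_functional f -> lin_functional g -> lin_functional h ->
  \sum_(p <- D t) f p.1 * conv g h p.2 = \sum_(p <- D t) conv f g p.1 * h p.2.
Proof.
move=> hf hg hh; case: H => _ [_ [_ [HC _]]].
have := HC t f g h hf hg hh; rewrite /ev3 /Delta_id /id_Delta !big_flatten.
rewrite !big_map /= => E.
have E' : \sum_(p <- D t) \sum_(q <- D p.1) f q.1 * g q.2 * h p.2 =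
  \sum_(p <- D t) \sum_(q <- D p.2) f p.1 * g q.1 * h q.2.
  transitivity (\sum_(p <- D t) \sum_(i <- [seq (q.1, q.2, p.2) | q <- D p.1]) f i.1.1 * g i.1.2 * h i.2).
    by apply: eq_bigr => p _; rewrite big_map.
  rewrite E; by apply: eq_bigr => p _; rewrite big_map.
transitivity (\sum_(p <- D t) \sum_(q <- D p.2) f p.1 * g q.1 * h q.2).
  apply: eq_bigr => p _; rewrite /conv /ev2 big_distrr /=.
  by apply: eq_bigr => q _; rewrite mulrA.
rewrite -E'; apply: eq_bigr => p _; rewrite /conv /ev2 big_distrl /=.
by apply: eq_bigr => q _.
Qed.

Lemma counit_l (g : T -> F) t : lin_functional g -> conv eps g t = g t.
Proof.
move=> hg; case: H => _ [_ [_ [_ [_ [HE _]]]]].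
by rewrite -{2}(HE t) lf_sum // /conv /ev2; apply: eq_bigr => p _; rewrite lfZ.
Qed.

Lemma counit_r (g : T -> F) t : lin_functional g -> conv g eps t = g t.
Proof.
move=> hg; case: H => _ [_ [_ [_ [_ [_ [HE _]]]]]].
rewrite -{2}(HE t) lf_sum // /conv /ev2; apply: eq_bigr => p _.
by rewrite lfZ // mulrC.
Qed.

Lemma eps_char : alg_char eps.
Proof. by case: H => _ [_ [_ [_ [HE _]]]]. Qed.

Lemma S_lin : lin_map S.
Proof. by case: H => _ [_ [_ [_ [_ [_ [_ [HS _]]]]]]]. Qed.

Lemma char_sum_mul (phi : T -> F) (r : seq (T * T)) (G1 G2 : T * T -> T) :
  alg_char phi ->
  phi (\sum_(p <- r) G1 p * G2 p) = \sum_(p <- r) phi (G1 p) * phi (G2 p).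
Proof. by move=> [l m _]; rewrite lf_sum //; apply: eq_bigr => p _; rewrite m. Qed.

Lemma char_alg (phi : T -> F) k : alg_char phi -> phi (k%:A) = k.
Proof. by move=> [l m o]; rewrite lfZ // o mulr1. Qed.

Lemma antipode_r (phi : T -> F) t : alg_char phi -> conv phi (phi \o S) t = eps t.
Proof.
move=> hphi; case: H => _ [_ [_ [_ [_ [_ [_ [_ [_ [HA _]]]]]]]]].
by rewrite -(char_alg (eps t) hphi) -HA char_sum_mul.
Qed.

Lemma antipode_l (phi : T -> F) t : alg_char phi -> conv (phi \o S) phi t = eps t.
Proof.
move=> hphi; case: H => _ [_ [_ [_ [_ [_ [_ [_ [HA _]]]]]]]].
by rewrite -(char_alg (eps t) hphi) -HA char_sum_mul.
Qed.


Lemma lin_mulr (psi : T -> F) (r : T) : lin_functional psi ->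
  lin_functional (fun t => psi (r * t)).
Proof. by move=> h k a b; rewrite mulrDr -scalerAr h. Qed.

Lemma lin_mull (psi : T -> F) (b : T) : lin_functional psi ->
  lin_functional (fun t => psi (t * b)).
Proof. by move=> h k a c; rewrite mulrDl -scalerAl h. Qed.

Lemma antipode_char (phi : T -> F) : alg_char phi -> alg_char (phi \o S).
Proof.
move=> hphi; have [lphi mphi phi1] := hphi.
set psi := phi \o S.
have lpsi : lin_functional psi by apply: lf_comp => //; exact: S_lin.
have [leps meps eps1] := eps_char.
have stepA : forall u b, conv (fun t => psi (t * b)) phi u = eps u * psi b.
  move=> u b.
  transitivity (\sum_(r <- D u) \sum_(q <- D b)
      conv (fun t => psi (r.1 * t)) phi q.1 * psi q.2 * phi r.2).
    rewrite /conv {1}/ev2; apply: eq_bigr => r _.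
    rewrite -(@counit_r (fun t => psi (r.1 * t)) b (@lin_mulr _ r.1 lpsi)).
    rewrite /conv {1}/ev2 big_distrl /=.
    transitivity (\sum_(q <- D b) psi (r.1 * q.1) * conv phi psi q.2 * phi r.2).
      by apply: eq_bigr => q _; rewrite antipode_r.
    rewrite -big_distrl /=.
    rewrite (@coassoc (fun t => psi (r.1 * t)) phi psi b (@lin_mulr _ r.1 lpsi) lphi lpsi).
    by rewrite big_distrl.
  rewrite exchange_big /=.
  transitivity (\sum_(q <- D b) psi q.2 * (eps u * eps q.1)).
    apply: eq_bigr => q _.
    rewrite -meps -(@antipode_l _ (u * q.1) hphi) conv_mul_ev //.
    rewrite ev2_tmul big_distrr /=; apply: eq_bigr => r _.
    rewrite /conv /ev2 !big_distrl big_distrr /=; apply: eq_bigr => s _.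
    by rewrite mphi /psi /=; ring.
  rewrite -(@counit_l psi b lpsi) /conv /ev2 big_distrr /=.
  by apply: eq_bigr => q _; ring.
split => //.
- move=> a b.
  rewrite -(@counit_r (fun t => psi (t * b)) a (@lin_mull _ b lpsi)).
  rewrite /conv {1}/ev2.
  transitivity (\sum_(p <- D a) psi (p.1 * b) * conv phi psi p.2).
    by apply: eq_bigr => p _; rewrite antipode_r.
  rewrite (@coassoc (fun t => psi (t * b)) phi psi a (@lin_mull _ b lpsi) lphi lpsi).
  transitivity (\sum_(p <- D a) eps p.1 * psi p.2 * psi b).
    by apply: eq_bigr => p _; rewrite stepA; ring.
  rewrite -big_distrl /= -(@counit_l psi a lpsi) mulrC.
  by [].
- have := @antipode_r _ 1 hphi; rewrite eps1 /conv.
  case: H => _ [_ [H1 _]]; rewrite (H1 phi psi lphi lpsi) /ev2 big_cons big_nil.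
  by rewrite /= phi1 mul1r addr0.
Qed.

End Hopf.

Section LinMap.
Variable F : fieldType.
Variables (V W : lmodType F).

Lemma lm0 (f : V -> W) : lin_map f -> f 0 = 0.
Proof. move=> h; have := h 1 0 0; rewrite scale1r addr0 scale1r.
by move/(congr1 (fun z => z - f 0)); rewrite subrr addrK. Qed.

Lemma lmD (f : V -> W) a b : lin_map f -> f (a + b) = f a + f b.
Proof. by move=> h; have := h 1 a b; rewrite !scale1r. Qed.

Lemma lmZ (f : V -> W) k a : lin_map f -> f (k *: a) = k *: f a.
Proof. by move=> h; rewrite -[k *: a]addr0 h lm0 // addr0. Qed.

Lemma lmB (f : V -> W) a b : lin_map f -> f (a - b) = f a - f b.
Proof. by move=> h; rewrite lmD // -scaleN1r lmZ // scaleN1r. Qed.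
End LinMap.

Lemma sum_widen (V : zmodType) n N (G : nat -> V) : (n <= N)%N ->
  (forall i, (n <= i)%N -> G i = 0) -> \sum_(i < n) G i = \sum_(i < N) G i.
Proof.
move=> hn hG; rewrite (big_ord_widen N G hn) big_mkcond /=.
apply: eq_bigr => i _; case: ifP => // /negbT; rewrite -leqNgt => h.
by rewrite hG.
Qed.

Section Ore.
Variable F : fieldType.
Variables (R T : algType F) (iota : R -> T) (s d : R -> R) (x : T).
Hypothesis Hs : is_skew_poly_ext iota s d x.

Lemma iota_lin : lin_map iota.
Proof. by case: Hs => -[]. Qed.
Lemma iota_mul a b : iota (a * b) = iota a * iota b.
Proof. by case: Hs => -[]. Qed.
Lemma iota1 : iota 1 = 1.
Proof. by case: Hs => -[]. Qed.

Lemma char_pow (phi : T -> F) i : alg_char phi -> phi (x ^+ i) = phi x ^+ i.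
Proof.
move=> [l m o]; elim: i => [|i IH]; first by rewrite !expr0.
by rewrite !exprS m IH.
Qed.

Lemma char_eq (phi psi : T -> F) : alg_char phi -> alg_char psi ->
  (forall r, phi (iota r) = psi (iota r)) -> phi x = psi x ->
  forall t, phi t = psi t.
Proof.
move=> hphi hpsi hr hx t; case: Hs => _ _ /(_ t) [c ->] _.
have [lphi mphi _] := hphi; have [lpsi mpsi _] := hpsi.
rewrite !lf_sum //; apply: eq_bigr => i _.
by rewrite mphi mpsi !char_pow // hr hx.
Qed.

Lemma char_rel (phi : T -> F) r : alg_char phi ->
  phi x * (phi (iota r) - phi (iota (s r))) = phi (iota (d r)).
Proof.
move=> hphi; have [l m o] := hphi; case: Hs => _ /(_ r) E _ _.
by rewrite -E lfB // !m mulrBr [phi (iota (s r)) * _]mulrC.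
Qed.

Lemma coef_uniq (c : nat -> R) N :
  \sum_(i < N) iota (c i) * x ^+ i = 0 -> forall i, (i < N)%N -> c i = 0.
Proof.
move=> h i hi; case: Hs => _ _ _ /(_ (mkseq c N)) U.
rewrite -(nth_mkseq 0 c hi); apply: U.
rewrite size_mkseq -[RHS]h; apply: eq_bigr => j _; by rewrite nth_mkseq.
Qed.

Variables (chi : R -> F) (mu : F).
Hypothesis hchi : alg_char chi.
Hypothesis compat : forall e, mu * chi (s e) + chi (d e) = mu * chi e.

Definition coefs (t : T) : seq R :=
  proj1_sig (constructive_indefinite_description _
    (match Hs with And4 _ _ h _ => h t end)).

Lemma coefs_spec t : t = \sum_(i < size (coefs t)) iota (coefs t)`_i * x ^+ i.
Proof. rewrite /coefs; case: constructive_indefinite_description => c /= h //. Qed.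

Definition ext (t : T) : F :=
  \sum_(i < size (coefs t)) chi (coefs t)`_i * mu ^+ i.

Lemma chi0 : chi 0 = 0.
Proof. by case: hchi => l _ _; apply: lf0. Qed.

Lemma ext_repr (c : nat -> R) n :
  ext (\sum_(i < n) iota (c i) * x ^+ i) = \sum_(i < n) chi (c i) * mu ^+ i.
Proof.
set t := \sum_(i < n) _.
have ht := coefs_spec t; rewrite /ext; set c0 := coefs t in ht *.
set N := maxn (size c0) n.
have h1 : (size c0 <= N)%N by rewrite leq_maxl.
have h2 : (n <= N)%N by rewrite leq_maxr.
pose cut i := if (i < n)%N then c i else 0.
have il := iota_lin.
have E : \sum_(i < N) iota (c0`_i - cut i) * x ^+ i = 0.
  rewrite (eq_bigr (fun i : 'I_N => iota c0`_i * x ^+ i - iota (cut i) * x ^+ i));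
    last by move=> i _; rewrite lmB // mulrBl.
  rewrite sumrB -(@sum_widen _ _ _ (fun i => iota c0`_i * x ^+ i) h1); last first.
    by move=> i hi; rewrite nth_default // lm0 // mul0r.
  rewrite -(@sum_widen _ _ _ (fun i => iota (cut i) * x ^+ i) h2); last first.
    by move=> i hi; rewrite /cut ltnNge hi lm0 // mul0r.
  rewrite -ht /t; apply/eqP; rewrite subr_eq0; apply/eqP.
  by apply: eq_bigr => i _; rewrite /cut ltn_ord.
rewrite (@sum_widen _ _ _ (fun i => chi c0`_i * mu ^+ i) h1); last first.
  by move=> i hi; rewrite nth_default // chi0 mul0r.
transitivity (\sum_(i < n) chi (cut i) * mu ^+ i); last first.
  by apply: eq_bigr => i _; rewrite /cut ltn_ord.
rewrite (@sum_widen _ _ _ (fun i => chi (cut i) * mu ^+ i) h2); last first.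
  by move=> i hi; rewrite /cut ltnNge hi chi0 mul0r.
apply: eq_bigr => i _; congr (chi _ * _); apply/eqP; rewrite -subr_eq0; apply/eqP.
exact: (@coef_uniq (fun i => c0`_i - cut i) N E i (ltn_ord i)).
Qed.

Lemma rep_spec t N : (size (coefs t) <= N)%N ->
  t = \sum_(i < N) iota (coefs t)`_i * x ^+ i.
Proof.
move=> h; rewrite {1}(coefs_spec t).
apply: (@sum_widen _ _ _ (fun i => iota (coefs t)`_i * x ^+ i) h).
by move=> i hi; rewrite nth_default // lm0 ?mul0r //; exact: iota_lin.
Qed.

Lemma ext_lin : lin_functional ext.
Proof.
move=> k a b; set ca := coefs a; set cb := coefs b.
set N := maxn (size ca) (size cb).
have ea : a = \sum_(i < N) iota ca`_i * x ^+ i by apply: rep_spec; rewrite leq_maxl.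
have eb : b = \sum_(i < N) iota cb`_i * x ^+ i by apply: rep_spec; rewrite leq_maxr.
have il := iota_lin.
have -> : k *: a + b = \sum_(i < N) iota (k *: ca`_i + cb`_i) * x ^+ i.
  rewrite {1}ea {1}eb scaler_sumr -big_split /=; apply: eq_bigr => i _.
  by rewrite lmD // lmZ // mulrDl scalerAl.
rewrite [in RHS]ea [in RHS]eb !ext_repr (ext_repr (fun i => k *: ca`_i + cb`_i)) mulr_sumr -big_split /=; apply: eq_bigr => i _.
case: hchi => lc _ _; by rewrite lfD // lfZ // mulrDl mulrA.
Qed.

Lemma ext_iota r : ext (iota r) = chi r.
Proof.
have := ext_repr (fun _ => r) 1; rewrite !big_ord1 !expr0 !mulr1 //.
Qed.

Lemma ext_mulx t : ext (t * x) = ext t * mu.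
Proof.
rewrite [in LHS](coefs_spec t) [in RHS](coefs_spec t); set c := coefs t.
set n := size c.
pose c' i := if i is j.+1 then c`_j else 0.
have il := iota_lin.
have -> : (\sum_(i < n) iota c`_i * x ^+ i) * x = \sum_(i < n.+1) iota (c' i) * x ^+ i.
  rewrite big_ord_recl /= lm0 // mul0r add0r mulr_suml; apply: eq_bigr => i _.
  by rewrite /c' /= exprSr mulrA.
rewrite !ext_repr big_ord_recl /= chi0 mul0r add0r mulr_suml; apply: eq_bigr => i _.
by rewrite /c' /= exprSr mulrA.
Qed.

Lemma ext_mulxn t i : ext (t * x ^+ i) = ext t * mu ^+ i.
Proof.
elim: i => [|i IH]; first by rewrite !expr0 !mulr1.
by rewrite !exprSr mulrA ext_mulx IH mulrA.
Qed.

Lemma x_iota e : x * iota e = iota (d e) + iota (s e) * x.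
Proof. case: Hs => _ /(_ e) E _ _; by rewrite -E subrK. Qed.

Lemma ext_mon c i e : ext (iota c * x ^+ i * iota e) = chi c * mu ^+ i * chi e.
Proof.
have [lc mc c1] := hchi.
elim: i e => [|i IH] e.
  by rewrite !expr0 !mulr1 -iota_mul ext_iota mc.
rewrite exprSr -mulrA -[(x ^+ i * x) * _]mulrA x_iota !mulrDr !mulrA.
rewrite lfD; last exact: ext_lin.
rewrite IH ext_mulx IH.
transitivity (chi c * mu ^+ i * (mu * chi (s e) + chi (d e))); first ring.
by rewrite compat exprSr; ring.
Qed.

Lemma ext_mul_iota (c : nat -> R) n e :
  ext ((\sum_(i < n) iota (c i) * x ^+ i) * iota e) =
  ext (\sum_(i < n) iota (c i) * x ^+ i) * chi e.
Proof.
rewrite mulr_suml lf_sum; last exact: ext_lin.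
rewrite ext_repr mulr_suml; apply: eq_bigr => i _; by rewrite ext_mon.
Qed.

Lemma ext_mul a b : ext (a * b) = ext a * ext b.
Proof.
rewrite [in LHS](coefs_spec b) [in RHS](coefs_spec b) ext_repr mulr_sumr.
rewrite lf_sum; last exact: ext_lin.
rewrite mulr_sumr; apply: eq_bigr => i _.
rewrite mulrA ext_mulxn [in LHS](coefs_spec a) ext_mul_iota -(coefs_spec a).
by rewrite mulrA.
Qed.

Lemma ext_char : alg_char ext.
Proof.
split; [exact: ext_lin | exact: ext_mul |].
by rewrite -iota1 ext_iota; case: hchi.
Qed.

Lemma ext_x : ext x = mu.
Proof.
have := ext_mulx 1; rewrite mul1r => ->.
by rewrite -iota1 ext_iota; case: hchi => _ _ ->; rewrite mul1r.
Qed.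

End Ore.

Section Main.
Variable F : fieldType.
Variables (R T : algType F) (iota : R -> T) (s d : R -> R) (x : T).
Variables (D : T -> tens2 T) (eps : T -> F) (S : T -> T).
Hypothesis hs : alg_automorphism s.
Hypothesis Hs : is_skew_poly_ext iota s d x.
Hypothesis H : is_hopf D eps S.

Definition Inv (phi : T -> F) := forall r, phi (iota (s r)) = phi (iota r).

Lemma conv_ext (f f' g g' : T -> F) t : (forall t, f t = f' t) -> (forall t, g t = g' t) ->
  conv D f g t = conv D f' g' t.
Proof. by move=> hf hg; rewrite /conv /ev2; apply: eq_bigr => p _; rewrite hf hg. Qed.

Lemma conv_assoc (f g k : T -> F) t : lin_functional f -> lin_functional g ->
  lin_functional k -> conv D f (conv D g k) t = conv D (conv D f g) k t.
Proof. move=> hf hg hk; exact: (coassoc H t hf hg hk). Qed.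

Lemma restr_l (f f' g : T -> F) r :
  right_coideal D (fun t => exists r, t = iota r) ->
  lin_functional f -> lin_functional f' -> lin_functional g ->
  (forall r, f (iota r) = f' (iota r)) -> conv D f g (iota r) = conv D f' g (iota r).
Proof.
move=> hc lf lf' lg he; have [u [hu hm]] := hc (iota r) (ex_intro _ r erefl).
rewrite /conv !(hu _ _ _ lg) //; rewrite /ev2; apply: eq_big_seq => p /hm [r' ->].
by rewrite he.
Qed.

Lemma restr_r (f g g' : T -> F) r :
  left_coideal D (fun t => exists r, t = iota r) ->
  lin_functional f -> lin_functional g -> lin_functional g' ->
  (forall r, g (iota r) = g' (iota r)) -> conv D f g (iota r) = conv D f g' (iota r).
Proof.
move=> hc lf lg lg' he; have [u [hu hm]] := hc (iota r) (ex_intro _ r erefl).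
rewrite /conv !(hu f) //; rewrite /ev2; apply: eq_big_seq => p /hm [r' ->].
by rewrite he.
Qed.

Lemma chi_char (phi : T -> F) : alg_char phi -> alg_char (phi \o iota).
Proof.
move=> [l m o]; split.
- exact: (lf_comp (iota_lin Hs) l).
- by move=> a b /=; rewrite (iota_mul Hs) m.
- by rewrite /= (iota1 Hs).
Qed.

Lemma uniq_var (phi psi : T -> F) : alg_char phi -> alg_char psi -> ~ Inv phi ->
  (forall r, phi (iota r) = psi (iota r)) -> forall t, phi t = psi t.
Proof.
move=> hphi hpsi hni he; apply: (char_eq Hs hphi hpsi he).
have [r0 hr0] : exists r0, phi (iota (s r0)) <> phi (iota r0).
  by apply: not_all_ex_not.
have E1 := char_rel Hs r0 hphi; have E2 := char_rel Hs r0 hpsi.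
rewrite -!he -E1 in E2.
apply: (mulIf (x := phi (iota r0) - phi (iota (s r0)))).
  by rewrite subr_eq0; apply/eqP => h; apply: hr0; rewrite h.
by rewrite E2.
Qed.

Lemma key (phi1 phi2 : T -> F) :
  (right_coideal D (fun t => exists r, t = iota r) \/
   left_coideal D (fun t => exists r, t = iota r)) ->
  alg_char phi1 -> alg_char phi2 -> Inv phi1 -> ~ Inv phi2 -> False.
Proof.
move=> hco hp1 hp2 hi1 hni2.
have hchi := chi_char hp1.
set chi := phi1 \o iota.
set mu := phi1 x + 1.
have compat : forall e, mu * chi (s e) + chi (d e) = mu * chi e.
  move=> e; rewrite /chi /= hi1 -(char_rel Hs e hp1) hi1 subrr mulr0 addr0 //.
set phi1' := ext Hs chi mu.
have hp1' : alg_char phi1' := ext_char Hs hchi compat.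
have e1 : forall r, phi1' (iota r) = phi1 (iota r) by move=> r; rewrite /phi1' ext_iota.
have x1 : phi1' x = phi1 x + 1 by rewrite /phi1' ext_x.
have [l1 _ _] := hp1; have [l1' _ _] := hp1'; have [l2 _ _] := hp2.
have hps1 := antipode_char H hp1; have hps2 := antipode_char H hp2.
have [ls1 _ _] := hps1; have [ls2 _ _] := hps2.
have [leps _ _] := eps_char H.
suff E : forall t, phi1' t = phi1 t.
  have := E x; rewrite x1 => /(congr1 (fun z => z - phi1 x)).
  rewrite subrr addrAC subrr add0r => /eqP; by rewrite oner_eq0.
case: hco => hc.
- set h := conv D phi1' (phi1 \o S).
  have hh : alg_char h := conv_char H hp1' hps1.
  have [lh _ _] := hh.
  have hr : forall r, h (iota r) = eps (iota r).
    move=> r; rewrite /h (restr_l (f' := phi1) _ hc) //; exact: (antipode_r H).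
  set phi2' := conv D h phi2.
  have hp2' : alg_char phi2' := conv_char H hh hp2.
  have E2 : forall t, phi2 t = phi2' t.
    apply: (uniq_var hp2 hp2' hni2) => r.
    by rewrite /phi2' (restr_l (f' := eps) _ hc) // (counit_l H).
  have Eh : forall t, h t = eps t.
    move=> t; rewrite -(counit_r H t lh).
    rewrite (conv_ext t (fun _ => erefl) (fun t => esym (antipode_r H t hp2))).
    rewrite conv_assoc // (conv_ext t (fun t => esym (E2 t)) (fun _ => erefl)).
    exact: (antipode_r H).
  move=> t; rewrite -(counit_r H t l1').
  rewrite (conv_ext t (fun _ => erefl) (fun t => esym (antipode_l H t hp1))).
  rewrite conv_assoc // (conv_ext t Eh (fun _ => erefl)).
  exact: (counit_l H).
- set h := conv D (phi1 \o S) phi1'.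
  have hh : alg_char h := conv_char H hps1 hp1'.
  have [lh _ _] := hh.
  have hr : forall r, h (iota r) = eps (iota r).
    move=> r; rewrite /h (restr_r (g' := phi1) _ hc) //; exact: (antipode_l H).
  set phi2' := conv D phi2 h.
  have hp2' : alg_char phi2' := conv_char H hp2 hh.
  have E2 : forall t, phi2 t = phi2' t.
    apply: (uniq_var hp2 hp2' hni2) => r.
    by rewrite /phi2' (restr_r (g' := eps) _ hc) // (counit_r H).
  have Eh : forall t, h t = eps t.
    move=> t; rewrite -(counit_l H t lh).
    rewrite (conv_ext t (fun t => esym (antipode_l H t hp2)) (fun _ => erefl)).
    rewrite -conv_assoc // (conv_ext t (fun _ => erefl) (fun t => esym (E2 t))).
    exact: (antipode_l H).
  move=> t; rewrite -(counit_l H t l1').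
  rewrite (conv_ext t (fun t => esym (antipode_r H t hp1)) (fun _ => erefl)).
  rewrite -conv_assoc // (conv_ext t (fun _ => erefl) Eh).
  exact: (counit_r H).
Qed.

End Main.

Section Class.
Variable F : fieldType.
Variables (R T : algType F) (iota : R -> T) (s d : R -> R) (x : T).
Hypothesis hs : alg_automorphism s.
Hypothesis Hs : is_skew_poly_ext iota s d x.

Lemma inv_invariant (M : T -> Prop) (phi : T -> F) : alg_char phi ->
  (forall t, M t <-> phi t = 0) -> Inv iota s phi -> invariant_type iota s d M.
Proof.
move=> hphi hM hi; have [_ [g gK Kg]] := hs; split.
- move=> r; rewrite /contr; split.
  + move=> /hM h0; exists (g r); split; last exact: Kg.
    by apply/hM; rewrite -hi Kg.
  + by move=> [r' [/hM h0 <-]]; apply/hM; rewrite hi.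
- move=> r; rewrite /contr => /hM h0; apply/hM.
  by rewrite -(char_rel Hs r hphi) hi subrr mulr0.
Qed.

Lemma var_variant (M : T -> Prop) (phi : T -> F) : alg_char phi ->
  (forall t, M t <-> phi t = 0) -> ~ Inv iota s phi -> variant_type iota s d M.
Proof.
move=> hphi hM hni; have [[ls ms s1] _] := hs.
have [lphi mphi phi1] := hphi.
have il := iota_lin Hs.
have chiA : forall c : F, phi (iota (c%:A)) = c.
  by move=> c; rewrite lmZ // (iota1 Hs) lfZ // phi1 mulr1.
have chiB : forall a b, phi (iota (a - b)) = phi (iota a) - phi (iota b).
  by move=> a b; rewrite lmB // lfB.
split.
- move=> E; apply: hni => r.
  set c := phi (iota r).
  have m1 : contr iota M (r - c%:A) by apply/hM; rewrite chiB chiA subrr.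
  have : contr iota M (s (r - c%:A)) by apply/E; exists (r - c%:A).
  move/hM; rewrite lmB // lmZ // s1 chiB chiA => /eqP; rewrite subr_eq0 => /eqP.
  by [].
- move=> a b; rewrite /contr; apply/hM.
  rewrite -(char_rel Hs _ hphi) !chiB lmB // !ms chiB.
  rewrite !(iota_mul Hs) !mphi (mulrC (phi (iota a))) (mulrC (phi (iota (s a)))).
  by rewrite !subrr mulr0.
Qed.

End Class.

Theorem theorem4p5 (F : closedFieldType) (R T : algType F)
    (s d : R -> R) (iota : R -> T) (x : T)
    (D : T -> tens2 T) (eps : T -> F) (S : T -> T) :
  alg_automorphism s ->
  sigma_derivation s d ->
  is_skew_poly_ext iota s d x ->
  is_hopf D eps S ->
  (right_coideal D (fun t => exists r, t = iota r) \/
   left_coideal D (fun t => exists r, t = iota r)) ->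
  (forall M : T -> Prop, in_Xi M -> invariant_type iota s d M) \/
  (forall M : T -> Prop, in_Xi M -> variant_type iota s d M).
Proof.
move=> hs _ Hs H hco.
case: (classic (exists phi : T -> F, alg_char phi /\ Inv iota s phi)) => [[p1 [hp1 hi1]]|hn].
- left => M [_ [phi [hphi hM]]].
  case: (classic (Inv iota s phi)) => hi.
    exact: (inv_invariant hs Hs hphi hM hi).
  by case: (key Hs H hco hp1 hphi hi1 hi).
- right => M [_ [phi [hphi hM]]].
  apply: (var_variant hs Hs hphi hM) => hi; apply: hn; by exists phi.
Qed.
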